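(* Let $r\geq1$, $k\geq1$, $n\geq1$ be integers, $a<b$, $N=2kn$, $\bar h=(b-a)/N$, and let $f_0,\dots,f_{N-1}$ be the functions defined in the context for the partition $a_i=a+i\bar h$ of $[a,b]$ into $N$ subintervals. For $j=0,\dots,k-1$ define $\mathcal{X}_j:\{0,\dots,kn-1\}\to\{0,\dots,N-1\}$ by $\mathcal{X}_j(i)=n(k-j)+i-1$. Let $c_0,\dots,c_{k-1}$ be real numbers with $\sum_{j=0}^{k-1}c_j(\tfrac12+\tfrac{j}{2k}-x)^{k-1}=1$ for all $x\in\mathbb{R}$. Let $\lambda_0,\dots,\lambda_{kn-1}\in\mathbb{R}$ and set $$I_j=\int_a^b\int_a^{y_{k-1}}\cdots\int_a^{y_1}\sum_{i=0}^{kn-1}\lambda_i f_{\mathcal{X}_j(i)}(y_0)\,dy_0\cdots dy_{k-1}.$$ Then $$\sum_{j=0}^{k-1}c_jI_j=\bar h^{\,r+1}(b-a)^{k-1}\frac{1}{(k-1)!}\varphi_r^1\sum_{i=0}^{kn-1}\lambda_i=(kn)^{-r}(b-a)^{k+r}2^{-r-1}\frac{\varphi_r^1}{(k-1)!}\cdot\frac{1}{kn}\sum_{i=0}^{kn-1}\lambda_i.$$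
   Context: $U_s$ is the Chebyshev polynomial of the second kind of degree $s$; $(x-t)_+^{s}=(x-t)^{s}$ for $x\geq t$ and $0$ otherwise. $\psi_{r+1}(x)=\frac{1}{r!}\int_{-1}^1(x-t)_+^{r}\,\mathrm{sgn}\,U_{r+1}(t)\,dt$. For a constant $\alpha$ and interval $[c,d]$, $\varphi_r([c,d],x)=\alpha\left(\frac{d-c}{2}\right)^r\psi_{r+1}\!\left(\frac{2x-d-c}{d-c}\right)$ for $x\in[c,d]$. $\varphi_r^1=\left(\tfrac12\right)^{r+1}\frac{\alpha}{(r+1)!}\int_{-1}^1(1-t)^{r+1}\,\mathrm{sgn}\,U_{r+1}(t)\,dt$. For $i=0,\dots,N-1$, $f_i(x)=\varphi_r([a_i,a_{i+1}],x)$ for $x\in[a_i,a_{i+1}]$ and $f_i(x)=0$ otherwise. *)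

(* Defs.v *)
From Stdlib Require Import Reals Lra.
From Coquelicot Require Import Coquelicot.
Open Scope R_scope.

Fixpoint sumR (m : nat) (F : nat -> R) : R :=
  match m with
  | O => 0
  | S m' => sumR m' F + F m'
  end.

Fixpoint chebU (s : nat) (x : R) : R :=
  match s with
  | O => 1
  | S s' =>
    match s' with
    | O => 2 * x
    | S s'' => 2 * x * chebU s' x - chebU s'' x
    end
  end.

Definition sgnR (x : R) : R :=
  if Rlt_dec 0 x then 1 else if Rlt_dec x 0 then -1 else 0.

Definition tpow (x t : R) (s : nat) : R :=
  if Rle_dec t x then (x - t) ^ s else 0.

(* psi_{r+1}(x) = 1/r! int_{-1}^1 (x-t)_+^r sgn U_{r+1}(t) dt *)
Definition psi (r : nat) (x : R) : R :=
  / INR (Factorial.fact r) * RInt (fun t => tpow x t r * sgnR (chebU (r + 1) t)) (-1) 1.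

Definition phi (alpha : R) (r : nat) (c d x : R) : R :=
  alpha * ((d - c) / 2) ^ r * psi r ((2 * x - d - c) / (d - c)).

Definition phi1 (alpha : R) (r : nat) : R :=
  (1 / 2) ^ (r + 1) * alpha / INR (Factorial.fact (r + 1)) *
  RInt (fun t => (1 - t) ^ (r + 1) * sgnR (chebU (r + 1) t)) (-1) 1.

Definition fpiece (alpha : R) (r : nat) (a b : R) (N i : nat) (x : R) : R :=
  let h := (b - a) / INR N in
  let ai := a + INR i * h in
  let ai1 := a + INR (i + 1) * h in
  if Rle_dec ai x then (if Rle_dec x ai1 then phi alpha r ai ai1 x else 0) else 0.

Definition Xmap (n k j i : nat) : nat := (n * (k - j) + i - 1)%nat.

Fixpoint iterInt (a : R) (m : nat) (g : R -> R) (y : R) : R :=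
  match m with
  | O => g y
  | S m' => RInt (fun t => iterInt a m' g t) a y
  end.

(* Main.v *)
Require Import Defs.
From Stdlib Require Import Reals Lra Lia ZArith.
From Coquelicot Require Import Coquelicot.
Open Scope R_scope.

Lemma cR_mult (f g : R -> R) x : continuous f x -> continuous g x -> continuous (fun y => f y * g y) x.
Proof. intros; now apply (continuous_mult f g). Qed.
Lemma cR_plus (f g : R -> R) x : continuous f x -> continuous g x -> continuous (fun y => f y + g y) x.
Proof. intros; now apply (continuous_plus f g). Qed.
Lemma cR_minus (f g : R -> R) x : continuous f x -> continuous g x -> continuous (fun y => f y - g y) x.
Proof. intros; now apply (continuous_minus f g). Qed.
Lemma cR_const (c x : R) : continuous (fun _ : R => c) x.
Proof. apply continuous_const. Qed.
Lemma cR_id (x : R) : continuous (fun y : R => y) x.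
Proof. apply continuous_id. Qed.
Lemma cR_pow (f : R -> R) m x : continuous f x -> continuous (fun y => f y ^ m) x.
Proof. intros H; induction m; simpl. apply cR_const. now apply cR_mult. Qed.
Lemma cR_comp (f g : R -> R) x : continuous f x -> continuous g (f x) -> continuous (fun y => g (f y)) x.
Proof. intros; now apply (continuous_comp f g). Qed.

Lemma isR_plus f g a b If Ig : is_RInt f a b If -> is_RInt g a b Ig -> is_RInt (fun y => f y + g y) a b (If + Ig).
Proof. intros; now apply (is_RInt_plus f g). Qed.
Lemma isR_minus f g a b If Ig : is_RInt f a b If -> is_RInt g a b Ig -> is_RInt (fun y => f y - g y) a b (If - Ig).
Proof. intros; now apply (is_RInt_minus f g). Qed.
Lemma isR_scal f a b k If : is_RInt f a b If -> is_RInt (fun y => k * f y) a b (k * If).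
Proof. intros; now apply (is_RInt_scal f). Qed.
Lemma isR_Chasles f a b c l1 l2 : is_RInt f a b l1 -> is_RInt f b c l2 -> is_RInt f a c (l1 + l2).
Proof. intros; now apply (is_RInt_Chasles f a b c). Qed.
Lemma isR_const a b v : is_RInt (fun _ => v) a b ((b - a) * v).
Proof. exact (is_RInt_const a b v). Qed.
Lemma isR_zero a b : is_RInt (fun _ => 0) a b 0.
Proof. pose proof (isR_const a b 0) as H. rewrite Rmult_0_r in H. exact H. Qed.
Lemma isR_swap (f : R -> R) a b l : is_RInt f b a l -> is_RInt f a b (- l).
Proof. intros H. exact (is_RInt_swap (V:=R_NormedModule) f a b l H). Qed.
Lemma isR_deriv (F f : R -> R) a b :
  (forall x, is_derive F x (f x)) -> (forall x, continuous f x) -> is_RInt f a b (F b - F a).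
Proof. intros H1 H2. apply (is_RInt_derive F f a b); auto. Qed.
Lemma isR_ext_open (f g : R -> R) a b (l : R) : (forall x, Rmin a b < x < Rmax a b -> f x = g x) -> is_RInt f a b l -> is_RInt g a b l.
Proof. apply is_RInt_ext. Qed.
Lemma RInt_cont_correct (f : R -> R) a b : (forall x, continuous f x) -> is_RInt f a b (RInt f a b).
Proof. intros H; apply (RInt_correct (V:=R_CompleteNormedModule)), (ex_RInt_continuous (V:=R_CompleteNormedModule)); auto. Qed.

Definition tp (z : R) (m : nat) : R := if Rle_dec 0 z then z ^ m else 0.

Lemma tpow_tp x t s : tpow x t s = tp (x - t) s.
Proof. unfold tpow, tp. destruct (Rle_dec t x), (Rle_dec 0 (x - t)); auto; lra. Qed.

Lemma tp_abs z m : (1 <= m)%nat -> tp z m = ((z + Rabs z) / 2) ^ m.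
Proof.
  intros Hm. unfold tp. destruct (Rle_dec 0 z).
  - rewrite Rabs_right by lra. f_equal; lra.
  - rewrite Rabs_left by lra. replace ((z + - z) / 2) with 0 by lra.
    destruct m; [lia|]. simpl; ring.
Qed.

Lemma tp_cont m z : (1 <= m)%nat -> continuous (fun y => tp y m) z.
Proof.
  intros Hm. eapply continuous_ext. intros; symmetry; apply tp_abs; auto.
  apply cR_pow. apply cR_mult. apply cR_plus. apply cR_id. apply continuous_Rabs. apply cR_const.
Qed.

Lemma tp_nonpos z m : z <= 0 -> tp z (S m) = 0.
Proof. intros H. unfold tp. destruct (Rle_dec 0 z). replace z with 0 by lra. simpl; ring. auto. Qed.
Lemma tp_nonneg z m : 0 <= z -> tp z m = z ^ m.
Proof. intros H. unfold tp. destruct (Rle_dec 0 z); auto; lra. Qed.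

Lemma poly_int m a b : is_RInt (fun z => z ^ m) a b (b ^ S m / INR (S m) - a ^ S m / INR (S m)).
Proof.
  apply (isR_deriv (fun z => z ^ S m / INR (S m))).
  - intros x. auto_derive; auto. destruct m as [|m']; [simpl; field|]. field. rewrite <- S_INR. apply not_0_INR. lia.
  - intros; apply cR_pow, cR_id.
Qed.

Lemma tp_int_le m z0 z1 : z0 <= z1 ->
  is_RInt (fun z => tp z m) z0 z1 ((tp z1 (S m) - tp z0 (S m)) / INR (S m)).
Proof.
  intros Hle. destruct (Rle_dec z1 0).
  - rewrite !tp_nonpos by lra. replace ((0 - 0) / INR (S m)) with 0 by (unfold Rdiv; ring).
    apply (isR_ext_open (fun _ => 0)); [|apply isR_zero].
    intros x Hx. rewrite Rmin_left, Rmax_right in Hx by lra. unfold tp.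
    destruct (Rle_dec 0 x); auto; lra.
  - destruct (Rle_dec 0 z0).
    + rewrite !tp_nonneg by lra.
      apply (isR_ext_open (fun z => z ^ m)).
      intros x Hx. rewrite Rmin_left, Rmax_right in Hx by lra. rewrite tp_nonneg; auto; lra.
      replace ((z1 ^ S m - z0 ^ S m) / INR (S m)) with (z1 ^ S m / INR (S m) - z0 ^ S m / INR (S m)) by (unfold Rdiv; ring).
      apply poly_int.
    + replace ((tp z1 (S m) - tp z0 (S m)) / INR (S m)) with (0 + (z1 ^ S m / INR (S m) - 0 ^ S m / INR (S m))).
      2:{ rewrite tp_nonneg by lra. rewrite tp_nonpos by lra. simpl. unfold Rdiv; ring. }
      apply isR_Chasles with 0.
      * apply (isR_ext_open (fun _ => 0)); [|apply isR_zero].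
        intros x Hx. rewrite Rmin_left, Rmax_right in Hx by lra. unfold tp.
        destruct (Rle_dec 0 x); auto; lra.
      * apply (isR_ext_open (fun z => z ^ m)); [|apply poly_int].
        intros x Hx. rewrite Rmin_left, Rmax_right in Hx by lra. rewrite tp_nonneg; auto; lra.
Qed.

Lemma tp_int m z0 z1 :
  is_RInt (fun z => tp z m) z0 z1 ((tp z1 (S m) - tp z0 (S m)) / INR (S m)).
Proof.
  destruct (Rle_dec z0 z1). now apply tp_int_le.
  replace ((tp z1 (S m) - tp z0 (S m)) / INR (S m)) with (- ((tp z0 (S m) - tp z1 (S m)) / INR (S m))).
  apply isR_swap. apply tp_int_le; lra. unfold Rdiv; ring.
Qed.

Lemma isR_unique (f : R -> R) a b l : is_RInt f a b l -> RInt f a b = l.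
Proof. intros H. exact (is_RInt_unique (V:=R_CompleteNormedModule) f a b l H). Qed.

Lemma derive_RInt_cont (f : R -> R) a y : (forall x, continuous f x) ->
  is_derive (fun z => RInt f a z) y (f y).
Proof.
  intros Hc. apply (is_derive_RInt (V:=R_NormedModule) f (fun z => RInt f a z) a y).
  apply filter_forall. intros z. apply RInt_cont_correct; auto. apply Hc.
Qed.

Lemma RInt_ext_all (f g : R -> R) a b : (forall x, f x = g x) -> RInt f a b = RInt g a b.
Proof. intros H. apply RInt_ext. intros; auto. Qed.

Lemma dR_id (x : R) : is_derive (fun z : R => z) x 1.
Proof. exact (is_derive_id (K:=R_AbsRing) x). Qed.
Lemma dR_mult (f g : R -> R) x df dg : is_derive f x df -> is_derive g x dg ->
  is_derive (fun z => f z * g z) x (df * g x + f x * dg).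
Proof. intros H1 H2. exact (is_derive_mult (K:=R_AbsRing) f g x df dg H1 H2 Rmult_comm). Qed.
Lemma dR_minus (f g : R -> R) x df dg : is_derive f x df -> is_derive g x dg ->
  is_derive (fun z => f z - g z) x (df - dg).
Proof. intros H1 H2. exact (is_derive_minus (K:=R_AbsRing) f g x df dg H1 H2). Qed.
Lemma dR_plus (f g : R -> R) x df dg : is_derive f x df -> is_derive g x dg ->
  is_derive (fun z => f z + g z) x (df + dg).
Proof. intros H1 H2. exact (is_derive_plus (K:=R_AbsRing) f g x df dg H1 H2). Qed.
Lemma dR_ext (f g : R -> R) x l : (forall t, f t = g t) -> is_derive f x l -> is_derive g x l.
Proof. apply is_derive_ext. Qed.

Section Cauchy.
Variable a : R.
Variable G : R -> R.
Hypothesis Gc : forall x, continuous G x.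

Definition J (m p : nat) (y : R) := RInt (fun s => s ^ p * (y - s) ^ m * G s) a y.

Lemma J_integrand_cont m p y x : continuous (fun s => s ^ p * (y - s) ^ m * G s) x.
Proof.
  apply cR_mult; auto. apply cR_mult. apply cR_pow, cR_id. apply cR_pow, cR_minus. apply cR_const. apply cR_id.
Qed.

Lemma J_rec m p y : J (S m) p y = y * J m p y - J m (S p) y.
Proof.
  unfold J. apply isR_unique.
  apply (isR_ext_open (fun s => y * (s ^ p * (y - s) ^ m * G s) - s ^ S p * (y - s) ^ m * G s)).
  intros; simpl; ring.
  apply isR_minus. apply isR_scal. apply RInt_cont_correct. apply J_integrand_cont.
  apply RInt_cont_correct. apply J_integrand_cont.
Qed.

Lemma J_derive0 p y : is_derive (J 0 p) y (y ^ p * G y).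
Proof.
  apply (dR_ext (fun z => RInt (fun s => s ^ p * G s) a z)).
  intros t. unfold J. apply RInt_ext_all. intros; simpl; ring.
  apply (derive_RInt_cont (fun s => s ^ p * G s)). intros; apply cR_mult; auto. apply cR_pow, cR_id.
Qed.

Lemma J_deriveS m : forall p y, is_derive (J (S m) p) y (INR (S m) * J m p y).
Proof.
  induction m as [|m IH]; intros p y.
  - apply (dR_ext (fun z => z * J 0 p z - J 0 (S p) z)).
    intros t; symmetry; apply J_rec.
    replace (INR 1 * J 0 p y) with ((1 * J 0 p y + y * (y ^ p * G y)) - y ^ S p * G y) by (simpl; ring).
    apply (dR_minus (fun z => z * J 0 p z) (J 0 (S p))).
    apply (dR_mult (fun z => z) (J 0 p)). apply dR_id. apply J_derive0.
    apply J_derive0.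
  - apply (dR_ext (fun z => z * J (S m) p z - J (S m) (S p) z)).
    intros t; symmetry; apply J_rec.
    replace (INR (S (S m)) * J (S m) p y) with
      ((1 * J (S m) p y + y * (INR (S m) * J m p y)) - INR (S m) * J m (S p) y).
    2:{ rewrite J_rec. rewrite (S_INR (S m)). ring. }
    apply (dR_minus (fun z => z * J (S m) p z) (J (S m) (S p))).
    apply (dR_mult (fun z => z) (J (S m) p)). apply dR_id. apply IH.
    apply IH.
Qed.

Lemma J_cont m p y : continuous (J m p) y.
Proof.
  apply (ex_derive_continuous (K:=R_AbsRing) (V:=R_NormedModule)). destruct m.
  eexists; apply J_derive0. eexists; apply J_deriveS.
Qed.

Lemma J_at_a m p : J m p a = 0.
Proof. unfold J. rewrite RInt_point. reflexivity. Qed.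

Lemma cauchy_formula m : forall y, iterInt a (S m) G y = J m 0 y / INR (Factorial.fact m).
Proof.
  induction m as [|m IH]; intros y.
  - simpl. unfold J. rewrite Rdiv_1_r. apply RInt_ext_all. intros; ring.
  - change (iterInt a (S (S m)) G y) with (RInt (fun t => iterInt a (S m) G t) a y).
    rewrite (RInt_ext_all _ (fun t => J m 0 t / INR (Factorial.fact m))) by (intros; apply IH).
    apply isR_unique.
    replace (J (S m) 0 y / INR (Factorial.fact (S m))) with
      (J (S m) 0 y / INR (Factorial.fact (S m)) - J (S m) 0 a / INR (Factorial.fact (S m)))
      by (rewrite J_at_a; unfold Rdiv; ring).
    apply (isR_deriv (fun z => J (S m) 0 z / INR (Factorial.fact (S m)))).
    + intros x. 
      replace (J m 0 x / INR (Factorial.fact m)) with (/ INR (Factorial.fact (S m)) * (INR (S m) * J m 0 x)).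
      apply (dR_ext (fun z => / INR (Factorial.fact (S m)) * J (S m) 0 z)).
      intros; unfold Rdiv; ring.
      apply is_derive_scal. apply J_deriveS.
      change (Factorial.fact (S m)) with (S m * Factorial.fact m)%nat. rewrite mult_INR.
      field. split. apply not_0_INR, Factorial.fact_neq_0. apply not_0_INR; lia.
    + intros x. apply cR_mult. apply J_cont. apply cR_const.
Qed.

End Cauchy.

Lemma sumR_ext K (F1 F2 : nat -> R) : (forall i, (i < K)%nat -> F1 i = F2 i) -> sumR K F1 = sumR K F2.
Proof. induction K; intros H; simpl; auto. rewrite IHK by (intros; apply H; lia). rewrite H by lia. auto. Qed.

Lemma sumR_cont K (lam : nat -> R) (H : nat -> R -> R) x :
  (forall i x, continuous (H i) x) -> continuous (fun z => sumR K (fun i => lam i * H i z)) x.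
Proof.
  intros Hc. induction K; simpl. apply cR_const. apply cR_plus; auto. apply cR_mult. apply cR_const. auto.
Qed.

Lemma iterInt_ext a m : forall (g1 g2 : R -> R), (forall x, g1 x = g2 x) -> forall y, iterInt a m g1 y = iterInt a m g2 y.
Proof.
  induction m; intros g1 g2 H y; simpl; auto.
  apply RInt_ext_all. intros; apply IHm; auto.
Qed.

Lemma iterInt_shift a m : forall g y, iterInt a (S m) g y = iterInt a m (fun z => RInt g a z) y.
Proof.
  induction m; intros g y. simpl. reflexivity.
  change (iterInt a (S (S m)) g y) with (RInt (fun t => iterInt a (S m) g t) a y).
  change (iterInt a (S m) (fun z => RInt g a z) y) with (RInt (fun t => iterInt a m (fun z => RInt g a z) t) a y).
  apply RInt_ext_all. intros; apply IHm.
Qed.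

Lemma J_lin a K (lam : nat -> R) (H : nat -> R -> R) m p y :
  (forall i x, continuous (H i) x) ->
  J a (fun x => sumR K (fun i => lam i * H i x)) m p y = sumR K (fun i => lam i * J a (H i) m p y).
Proof.
  intros Hc. unfold J at 1. apply isR_unique. induction K; simpl.
  - apply (isR_ext_open (fun _ => 0)). intros; ring. apply isR_zero.
  - apply (isR_ext_open (fun s => s ^ p * (y - s) ^ m * sumR K (fun i => lam i * H i s) + lam K * (s ^ p * (y - s) ^ m * H K s))).
    intros; ring.
    apply isR_plus; auto. apply isR_scal. apply RInt_cont_correct. apply J_integrand_cont. auto.
Qed.

Lemma iterInt_lin a m K (lam : nat -> R) (H : nat -> R -> R) y :
  (forall i x, continuous (H i) x) ->
  iterInt a m (fun x => sumR K (fun i => lam i * H i x)) y = sumR K (fun i => lam i * iterInt a m (H i) y).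
Proof.
  intros Hc. destruct m. reflexivity.
  rewrite cauchy_formula by (intros; apply sumR_cont; auto).
  rewrite (sumR_ext K _ (fun i => lam i * (J a (H i) m 0 y / INR (Factorial.fact m)))).
  2:{ intros; rewrite cauchy_formula; auto. }
  rewrite J_lin by auto. clear. induction K; simpl. unfold Rdiv; ring. rewrite <- IHK. unfold Rdiv; ring.
Qed.

Lemma Rmin_abs x y : Rmin x y = (x + y - Rabs (x - y)) / 2.
Proof. unfold Rmin. destruct (Rle_dec x y); [rewrite Rabs_left1 by lra|rewrite Rabs_right by lra]; lra. Qed.
Lemma Rmax_abs x y : Rmax x y = (x + y + Rabs (x - y)) / 2.
Proof. unfold Rmax. destruct (Rle_dec x y); [rewrite Rabs_left1 by lra|rewrite Rabs_right by lra]; lra. Qed.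

Definition clamp (p q y : R) := Rmax p (Rmin y q).

Lemma clamp_cont p q y : continuous (clamp p q) y.
Proof.
  apply (continuous_ext (fun x => (p + (x + q - Rabs (x - q)) / 2 + Rabs (p - (x + q - Rabs (x - q)) / 2)) / 2)).
  intros x. unfold clamp. rewrite Rmax_abs, Rmin_abs. reflexivity.
  assert (Hm : continuous (fun x => (x + q - Rabs (x - q)) / 2) y).
  { apply cR_mult; [|apply cR_const]. apply cR_minus. apply cR_plus. apply cR_id. apply cR_const.
    apply continuous_Rabs_comp. apply cR_minus. apply cR_id. apply cR_const. }
  apply cR_mult; [|apply cR_const]. apply cR_plus. apply cR_plus. apply cR_const. auto.
  apply continuous_Rabs_comp. apply cR_minus. apply cR_const. auto.
Qed.

Definition pieceF (p q : R) (phi : R -> R) (x : R) : R :=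
  if Rle_dec p x then (if Rle_dec x q then phi x else 0) else 0.

Section Piece.
Variables (a b p q : R) (phi : R -> R).
Hypotheses (Hap : a <= p) (Hpq : p <= q) (Hqb : q <= b) (phic : forall x, continuous phi x).

Definition Phi (y : R) := RInt phi p y.

Lemma Phi_p : Phi p = 0.
Proof. unfold Phi. rewrite RInt_point. reflexivity. Qed.

Lemma Phi_deriv y : is_derive Phi y (phi y).
Proof. apply (derive_RInt_cont phi p y). auto. Qed.

Lemma Phi_cont y : continuous Phi y.
Proof. apply (ex_derive_continuous (K:=R_AbsRing) (V:=R_NormedModule)). eexists; apply Phi_deriv. Qed.

Lemma piece_zero_left y : y <= p -> is_RInt (pieceF p q phi) a y 0.
Proof.
  intros Hy. apply (isR_ext_open (fun _ => 0)); [|apply isR_zero].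
  intros x Hx. assert (x < p). { pose proof (Rmax_l a y); pose proof (Rmax_r a y). unfold Rmax in *. destruct (Rle_dec a y); lra. }
  unfold pieceF. destruct (Rle_dec p x); auto; lra.
Qed.

Lemma piece_mid y : p <= y <= q -> is_RInt (pieceF p q phi) p y (Phi y).
Proof.
  intros Hy. apply (isR_ext_open phi). intros x Hx. rewrite Rmin_left, Rmax_right in Hx by lra.
  unfold pieceF. destruct (Rle_dec p x); [destruct (Rle_dec x q)|]; auto; lra.
  apply RInt_cont_correct; auto.
Qed.

Lemma piece_right y : q <= y -> is_RInt (pieceF p q phi) q y 0.
Proof.
  intros Hy. apply (isR_ext_open (fun _ => 0)); [|apply isR_zero].
  intros x Hx. rewrite Rmin_left, Rmax_right in Hx by lra.
  unfold pieceF. destruct (Rle_dec p x); [destruct (Rle_dec x q)|]; auto; lra.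
Qed.

Lemma piece_RInt y : is_RInt (pieceF p q phi) a y (Phi (clamp p q y)).
Proof.
  unfold clamp. destruct (Rle_dec y p).
  - rewrite Rmin_left by lra. rewrite Rmax_left by lra. rewrite Phi_p. apply piece_zero_left; auto.
  - destruct (Rle_dec y q).
    + rewrite Rmin_left by lra. rewrite Rmax_right by lra. replace (Phi y) with (0 + Phi y) by ring.
      apply isR_Chasles with p. apply piece_zero_left; lra. apply piece_mid; lra.
    + rewrite Rmin_right by lra. rewrite Rmax_right by lra. replace (Phi q) with ((0 + Phi q) + 0) by ring.
      apply isR_Chasles with q. apply isR_Chasles with p. apply piece_zero_left; lra. apply piece_mid; lra.
      apply piece_right; lra.
Qed.

Definition Gp (y : R) := Phi (clamp p q y).

Lemma Gp_cont y : continuous Gp y.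
Proof. unfold Gp. apply cR_comp. apply clamp_cont. apply Phi_cont. Qed.

Lemma piece_RInt_eq y : RInt (pieceF p q phi) a y = Gp y.
Proof. apply isR_unique. apply piece_RInt. Qed.

Lemma piece_iter m :
  iterInt a (S m) (pieceF p q phi) b = RInt (fun t => (b - t) ^ m / INR (Factorial.fact m) * phi t) p q.
Proof.
  destruct m as [|m].
  - simpl. rewrite (RInt_ext_all (fun t => pieceF p q phi t) (pieceF p q phi)) by auto.
    rewrite piece_RInt_eq. unfold Gp, clamp. rewrite Rmin_right by lra. rewrite Rmax_right by lra.
    unfold Phi. apply RInt_ext_all. intros; simpl; field.
  - rewrite iterInt_shift.
    rewrite (iterInt_ext a (S m) (fun z => RInt (pieceF p q phi) a z) Gp (fun x => piece_RInt_eq x)).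
    rewrite (cauchy_formula a Gp Gp_cont).
    set (W := fun t => - (b - t) ^ S m / INR (S m)).
    assert (HSm : INR (S m) <> 0) by (apply not_0_INR; lia).
    assert (HW : forall t, is_derive W t ((b - t) ^ m)).
    { intros t. unfold W.
      apply (dR_ext (fun t => - / INR (S m) * (b - t) ^ S m)). intros; unfold Rdiv; ring.
      replace ((b - t) ^ m) with (- / INR (S m) * (INR (S m) * (-1) * (b - t) ^ Nat.pred (S m))).
      apply is_derive_scal. apply is_derive_pow.
      apply (dR_ext (fun t => b - t)). auto.
      replace (-1) with (0 - 1) by ring. apply (dR_minus (fun _ => b) (fun t => t)).
      apply (is_derive_const (K:=R_AbsRing) (V:=R_NormedModule)). apply dR_id.
      simpl. field. auto. }
    set (R0 := RInt (fun t => W t * phi t) p q).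
    assert (HJ : J a Gp m 0 b = - R0).
    { unfold J. apply isR_unique.
      replace (- R0) with ((0 + (W q * Phi q - R0)) + (0 - W q * Phi q)) by ring.
      apply isR_Chasles with q. apply isR_Chasles with p.
      - apply (isR_ext_open (fun _ => 0)); [|apply isR_zero].
        intros x Hx. rewrite Rmin_left, Rmax_right in Hx by lra.
        unfold Gp, clamp. rewrite Rmin_left by lra. rewrite Rmax_left by lra. rewrite Phi_p. ring.
      - apply (isR_ext_open (fun t => (b - t) ^ m * Phi t)).
        intros x Hx. rewrite Rmin_left, Rmax_right in Hx by lra.
        unfold Gp, clamp. rewrite Rmin_left by lra. rewrite Rmax_right by lra. simpl; ring.
        apply (isR_ext_open (fun t => ((b - t) ^ m * Phi t + W t * phi t) - W t * phi t)).
        intros; ring.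
        replace (W q * Phi q - R0) with ((W q * Phi q - W p * Phi p) - R0) by (rewrite Phi_p; ring).
        apply isR_minus.
        + apply (isR_deriv (fun t => W t * Phi t)).
          intros x. apply dR_mult. apply HW. apply Phi_deriv.
          intros x. apply cR_plus. apply cR_mult. apply cR_pow, cR_minus. apply cR_const. apply cR_id.
          apply Phi_cont. apply cR_mult; auto.
          apply (ex_derive_continuous (K:=R_AbsRing) (V:=R_NormedModule)). eexists; apply HW.
        + apply RInt_cont_correct. intros x. apply cR_mult; auto.
          apply (ex_derive_continuous (K:=R_AbsRing) (V:=R_NormedModule)). eexists; apply HW.
      - apply (isR_ext_open (fun t => (b - t) ^ m * Phi q)).
        intros x Hx. rewrite Rmin_left, Rmax_right in Hx by lra.
        unfold Gp, clamp. rewrite Rmin_right by lra. rewrite Rmax_right by lra. simpl; ring.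
        replace (0 - W q * Phi q) with (W b * Phi q - W q * Phi q).
        2:{ unfold W. replace (b - b) with 0 by ring. simpl. field. auto. }
        apply (isR_deriv (fun t => W t * Phi q)).
        intros x. replace ((b - x) ^ m * Phi q) with ((b - x) ^ m * Phi q + W x * 0) by ring.
        apply (dR_mult W (fun _ => Phi q)). apply HW. apply (is_derive_const (K:=R_AbsRing) (V:=R_NormedModule)).
        intros x. apply cR_mult. apply cR_pow, cR_minus. apply cR_const. apply cR_id. apply cR_const. }
    rewrite HJ. symmetry. apply isR_unique.
    apply (isR_ext_open (fun t => (- / INR (Factorial.fact m)) * (W t * phi t))).
    intros x _. unfold W. change (Factorial.fact (S m)) with (S m * Factorial.fact m)%nat. rewrite mult_INR.
    field. split; auto. apply not_0_INR, Factorial.fact_neq_0.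
    replace (- R0 / INR (Factorial.fact m)) with ((- / INR (Factorial.fact m)) * R0) by (unfold Rdiv; ring).
    apply isR_scal. apply RInt_cont_correct. intros x. apply cR_mult; auto.
    apply (ex_derive_continuous (K:=R_AbsRing) (V:=R_NormedModule)). eexists; apply HW.
Qed.

End Piece.

Inductive stepf (s : R -> R) : R -> R -> Prop :=
| st_const c d v : c <= d -> (forall t, c < t < d -> s t = v) -> stepf s c d
| st_split c e d : stepf s c e -> stepf s e d -> stepf s c d.

Lemma stepf_le s c d : stepf s c d -> c <= d.
Proof. induction 1; lra. Qed.

Lemma cheb_sin_pair n th :
  chebU n (cos th) * sin th = sin (INR (S n) * th) /\
  chebU (S n) (cos th) * sin th = sin (INR (S (S n)) * th).
Proof.
  induction n.
  - simpl. split. replace (1 * th) with th by ring. ring.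
    replace ((1 + 1) * th) with (2 * th) by ring. rewrite sin_2a. ring.
  - destruct IHn as [H1 H2]. split; auto.
    change (chebU (S (S n)) (cos th)) with (2 * cos th * chebU (S n) (cos th) - chebU n (cos th)).
    replace (INR (S (S (S n))) * th) with (INR (S (S n)) * th + th) by (rewrite (S_INR (S (S n))); ring).
    replace (2 * cos th * chebU (S n) (cos th) - chebU n (cos th)) with
       (2 * cos th * chebU (S n) (cos th) - chebU n (cos th)) by ring.
    replace ((2 * cos th * chebU (S n) (cos th) - chebU n (cos th)) * sin th) with
       (2 * cos th * (chebU (S n) (cos th) * sin th) - chebU n (cos th) * sin th) by ring.
    rewrite H1, H2. replace (INR (S n) * th) with (INR (S (S n)) * th - th) by (rewrite (S_INR (S n)); ring).
    rewrite sin_plus, sin_minus. ring.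
Qed.

Lemma cheb_cont_pair n x : continuous (chebU n) x /\ continuous (chebU (S n)) x.
Proof.
  induction n.
  - split. apply (continuous_ext (fun _ => 1)). intros; reflexivity. apply cR_const.
    apply (continuous_ext (fun y => 2 * y)). intros; reflexivity. apply cR_mult. apply cR_const. apply cR_id.
  - destruct IHn as [H1 H2]. split; auto.
    apply (continuous_ext (fun y => 2 * y * chebU (S n) y - chebU n y)). intros; reflexivity.
    apply cR_minus; auto. apply cR_mult; auto. apply cR_mult. apply cR_const. apply cR_id.
Qed.

Lemma cheb_continuity n : continuity (chebU n).
Proof. intros x. apply continuity_pt_filterlim. apply (cheb_cont_pair n x). Qed.

Lemma IVT2 f x y : continuity f -> x < y -> f x * f y < 0 -> exists z, x <= z <= y /\ f z = 0.
Proof.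
  intros Hc Hxy Hm.
  destruct (Rlt_dec (f x) 0).
  - assert (0 < f y) by nra. destruct (IVT f x y Hc Hxy r H) as [z Hz]. exists z; auto.
  - assert (0 < f x) by (destruct (Req_dec (f x) 0); [rewrite H in Hm; lra|lra]).
    assert (f y < 0) by nra.
    destruct (IVT (- f)%F x y (continuity_opp f Hc) Hxy) as [z Hz].
    unfold opp_fct; lra. unfold opp_fct; lra.
    exists z. unfold opp_fct in Hz. split; [tauto|lra].
Qed.

Lemma sgn_const f c d : continuity f -> c < d -> (forall t, c < t < d -> f t <> 0) ->
  forall t, c < t < d -> sgnR (f t) = sgnR (f ((c + d) / 2)).
Proof.
  intros Hc Hcd Hnz t Ht. set (mid := (c + d) / 2).
  assert (Hm : c < mid < d) by (unfold mid; lra).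
  assert (Ht0 := Hnz t Ht). assert (Hm0 := Hnz mid Hm).
  assert (Hpos : 0 < f t * f mid).
  { destruct (Rlt_le_dec 0 (f t * f mid)); auto. exfalso.
    assert (Hneg : f t * f mid < 0).
    { destruct r. auto. exfalso. apply Rmult_integral in H. tauto. }
    destruct (Rlt_le_dec t mid).
    - destruct (IVT2 f t mid Hc r0 Hneg) as [z [Hz1 Hz2]]. apply (Hnz z); auto; lra.
    - destruct (Req_dec t mid). subst; nra.
      assert (mid < t) by lra. rewrite Rmult_comm in Hneg.
      destruct (IVT2 f mid t Hc H0 Hneg) as [z [Hz1 Hz2]]. apply (Hnz z); auto; lra. }
  unfold sgnR. destruct (Rlt_dec 0 (f t)), (Rlt_dec 0 (f mid)); auto.
  - exfalso. assert (f mid < 0) by lra. nra.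
  - exfalso. assert (f t < 0) by lra. nra.
  - destruct (Rlt_dec (f t) 0), (Rlt_dec (f mid) 0); auto; lra.
Qed.

Section Breaks.
Variable n : nat.
Let M := S n.
Definition th (j : nat) := PI - INR j * PI / INR (S n).
Definition xb (j : nat) := cos (th j).

Lemma INR_M_pos : 0 < INR (S n).
Proof. apply lt_0_INR. lia. Qed.

Lemma th_bounds j : (j <= S n)%nat -> 0 <= th j <= PI.
Proof.
  intros Hj. unfold th. pose proof PI_RGT_0. pose proof INR_M_pos.
  apply le_INR in Hj. pose proof (pos_INR j).
  assert (0 <= INR j * PI / INR (S n) <= PI).
  { split. apply Rmult_le_pos; [apply Rmult_le_pos|]; try lra. left; apply Rinv_0_lt_compat; lra.
    apply (Rmult_le_reg_r (INR (S n))); auto. unfold Rdiv. rewrite Rmult_assoc, Rinv_l by lra. nra. }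
  lra.
Qed.

Lemma th_S j : th (S j) = th j - PI / INR (S n).
Proof. unfold th. rewrite S_INR. field. pose proof INR_M_pos; lra. Qed.

Lemma xb_lt j : (j < S n)%nat -> xb j < xb (S j).
Proof.
  intros Hj. unfold xb. apply cos_decreasing_1.
  apply th_bounds; lia. apply th_bounds; lia. apply th_bounds; lia. apply th_bounds; lia.
  rewrite th_S. pose proof PI_RGT_0. pose proof INR_M_pos.
  assert (0 < PI / INR (S n)) by (apply Rdiv_lt_0_compat; lra). lra.
Qed.

Lemma xb_0 : xb 0 = -1.
Proof. unfold xb, th. replace (PI - INR 0 * PI / INR (S n)) with PI by (simpl; unfold Rdiv; ring). apply cos_PI. Qed.

Lemma xb_M : xb (S n) = 1.
Proof. unfold xb, th. replace (PI - INR (S n) * PI / INR (S n)) with 0. apply cos_0.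
  field. pose proof INR_M_pos; lra. Qed.

Lemma xb_range j : (j <= S n)%nat -> -1 <= xb j <= 1.
Proof. intros. unfold xb. apply COS_bound. Qed.

Lemma cheb_nz j t : (j < S n)%nat -> xb j < t < xb (S j) -> chebU n t <> 0.
Proof.
  intros Hj Ht Hz.
  assert (Hr1 := xb_range j ltac:(lia)). assert (Hr2 := xb_range (S j) ltac:(lia)).
  assert (Ht1 : -1 < t < 1) by lra.
  set (a := acos t).
  assert (Ha := acos_bound_lt t Ht1). fold a in Ha.
  assert (Hca : cos a = t) by (apply cos_acos; lra).
  assert (Hs : 0 < sin a) by (apply sin_gt_0; lra).
  destruct (cheb_sin_pair n a) as [Hcs _]. rewrite Hca, Hz, Rmult_0_l in Hcs.
  destruct (sin_eq_0_0 _ (eq_sym Hcs)) as [K HK].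
  pose proof PI_RGT_0. pose proof INR_M_pos.
  assert (Hb1 := th_bounds j ltac:(lia)). assert (Hb2 := th_bounds (S j) ltac:(lia)).
  assert (Hlow : th (S j) < a).
  { destruct (Rlt_le_dec (th (S j)) a); auto. exfalso.
    destruct r. assert (cos (th (S j)) < cos a) by (apply cos_decreasing_1; lra). unfold xb in Ht; lra.
    unfold xb in Ht. rewrite <- H1, Hca in Ht. lra. }
  assert (Hhigh : a < th j).
  { destruct (Rlt_le_dec a (th j)); auto. exfalso.
    destruct r. assert (cos a < cos (th j)) by (apply cos_decreasing_1; lra). unfold xb in Ht; lra.
    unfold xb in Ht. rewrite H1, Hca in Ht. lra. }
  assert (HaK : a = IZR K * PI / INR (S n)) by (rewrite <- HK; field; lra).
  rewrite HaK in Hlow, Hhigh. rewrite th_S in Hlow. unfold th in Hlow, Hhigh.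
  assert (E1 : INR (S n) - INR j - 1 < IZR K).
  { apply (Rmult_lt_reg_r (PI / INR (S n))). apply Rdiv_lt_0_compat; lra.
    replace ((INR (S n) - INR j - 1) * (PI / INR (S n))) with (PI - INR j * PI / INR (S n) - PI / INR (S n)) by (field; lra).
    replace (IZR K * (PI / INR (S n))) with (IZR K * PI / INR (S n)) by (field; lra). lra. }
  assert (E2 : IZR K < INR (S n) - INR j).
  { apply (Rmult_lt_reg_r (PI / INR (S n))). apply Rdiv_lt_0_compat; lra.
    replace ((INR (S n) - INR j) * (PI / INR (S n))) with (PI - INR j * PI / INR (S n)) by (field; lra).
    replace (IZR K * (PI / INR (S n))) with (IZR K * PI / INR (S n)) by (field; lra). lra. }
  rewrite !INR_IZR_INZ in E1, E2.
  rewrite <- minus_IZR in E1, E2. replace (IZR (Z.of_nat (S n) - Z.of_nat j) - 1) with (IZR (Z.of_nat (S n) - Z.of_nat j - 1)) in E1 by (rewrite minus_IZR; reflexivity).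
  apply lt_IZR in E1. apply lt_IZR in E2. lia.
Qed.

Lemma cheb_step_upto j : (1 <= j <= S n)%nat -> stepf (fun t => sgnR (chebU n t)) (xb 0) (xb j).
Proof.
  induction j as [|j IH]; intros Hj. lia.
  assert (Hpiece : stepf (fun t => sgnR (chebU n t)) (xb j) (xb (S j))).
  { apply st_const with (sgnR (chebU n ((xb j + xb (S j)) / 2))).
    left; apply xb_lt; lia.
    intros t Ht. apply (sgn_const (chebU n) (xb j) (xb (S j))); auto.
    apply cheb_continuity. apply xb_lt; lia. intros; apply (cheb_nz j); auto; lia. }
  destruct j. auto.
  apply st_split with (xb (S j)); auto. apply IH; lia.
Qed.

Lemma cheb_step : stepf (fun t => sgnR (chebU n t)) (-1) 1.
Proof. rewrite <- xb_0, <- xb_M. apply cheb_step_upto. lia. Qed.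

End Breaks.

Lemma isR_comp_lin (f : R -> R) (u v a b l : R) :
  is_RInt f (u * a + v) (u * b + v) l -> is_RInt (fun y => u * f (u * y + v)) a b l.
Proof. intros H. exact (is_RInt_comp_lin (V:=R_NormedModule) f u v a b l H). Qed.

Lemma tp_shift_int m u c d :
  is_RInt (fun t => tp (u - t) m) c d ((tp (u - c) (S m) - tp (u - d) (S m)) / INR (S m)).
Proof.
  pose proof (tp_int m ((-1) * c + u) ((-1) * d + u)) as H.
  apply isR_comp_lin in H. apply isR_scal with (k := -1) in H.
  eapply isR_ext_open; [|replace ((tp (u - c) (S m) - tp (u - d) (S m)) / INR (S m)) with
     (-1 * ((tp (-1 * d + u) (S m) - tp (-1 * c + u) (S m)) / INR (S m))); [exact H|]].
  intros x _. simpl. replace (-1 * x + u) with (u - x) by ring. ring.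
  replace (-1 * d + u) with (u - d) by ring. replace (-1 * c + u) with (u - c) by ring.
  unfold Rdiv; ring.
Qed.

Lemma tp_lin_int m c a b :
  is_RInt (fun u => tp (u - c) m) a b ((tp (b - c) (S m) - tp (a - c) (S m)) / INR (S m)).
Proof.
  pose proof (tp_int m (1 * a + - c) (1 * b + - c)) as H.
  apply isR_comp_lin in H.
  eapply isR_ext_open; [|replace ((tp (b - c) (S m) - tp (a - c) (S m)) / INR (S m)) with
     ((tp (1 * b + - c) (S m) - tp (1 * a + - c) (S m)) / INR (S m)); [exact H|]].
  intros x _. cbv beta. replace (1 * x + - c) with (x - c) by ring. ring.
  replace (1 * b + - c) with (b - c) by ring. replace (1 * a + - c) with (a - c) by ring. reflexivity.
Qed.

Section PsiStep.
Variable s : R -> R.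
Variable r : nat.

Definition PsiCD (c d u : R) := RInt (fun t => tpow u t r * s t) c d.
Definition Mom (c d : R) := RInt (fun t => (1 - t) ^ S r * s t) c d.

Lemma stepf_psi c d : stepf s c d -> -1 <= c -> d <= 1 ->
  (forall u, is_RInt (fun t => tpow u t r * s t) c d (PsiCD c d u)) /\
  (forall u, continuous (PsiCD c d) u) /\
  is_RInt (fun t => (1 - t) ^ S r * s t) c d (Mom c d) /\
  is_RInt (PsiCD c d) (-1) 1 (/ INR (S r) * Mom c d).
Proof.
  induction 1 as [c d v Hcd Hs | c e d H1 IH1 H2 IH2]; intros Hc Hd.
  - set (V := fun u => v * ((tp (u - c) (S r) - tp (u - d) (S r)) / INR (S r))).
    assert (HV : forall u, is_RInt (fun t => tpow u t r * s t) c d (V u)).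
    { intros u. apply (isR_ext_open (fun t => v * tp (u - t) r)).
      intros x Hx. rewrite Rmin_left, Rmax_right in Hx by lra. rewrite Hs by lra. rewrite tpow_tp. ring.
      apply isR_scal. apply tp_shift_int. }
    assert (HP : forall u, PsiCD c d u = V u) by (intros; apply isR_unique; auto).
    set (Mv := v * (((1 - c) ^ S (S r) - (1 - d) ^ S (S r)) / INR (S (S r)))).
    assert (HM : is_RInt (fun t => (1 - t) ^ S r * s t) c d Mv).
    { apply (isR_ext_open (fun t => v * (1 - t) ^ S r)).
      intros x Hx. rewrite Rmin_left, Rmax_right in Hx by lra. rewrite Hs by lra. ring.
      apply isR_scal.
      replace (((1 - c) ^ S (S r) - (1 - d) ^ S (S r)) / INR (S (S r))) with
         ((- (1 - d) ^ S (S r) / INR (S (S r))) - (- (1 - c) ^ S (S r) / INR (S (S r)))) by (unfold Rdiv; ring).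
      apply (isR_deriv (fun t => - (1 - t) ^ S (S r) / INR (S (S r)))).
      - intros x.
        apply (dR_ext (fun t => - / INR (S (S r)) * (1 - t) ^ S (S r))). intros; unfold Rdiv; ring.
        replace ((1 - x) ^ S r) with (- / INR (S (S r)) * (INR (S (S r)) * (0 - 1) * (1 - x) ^ Nat.pred (S (S r)))).
        apply is_derive_scal. apply is_derive_pow.
        apply (dR_minus (fun _ => 1) (fun t => t)).
        apply (is_derive_const (K:=R_AbsRing) (V:=R_NormedModule)). apply dR_id.
        simpl Nat.pred. field. apply not_0_INR; lia.
      - intros; apply cR_pow, cR_minus. apply cR_const. apply cR_id. }
    assert (HMe : Mom c d = Mv) by (apply isR_unique; auto).
    split; [intros u; rewrite HP; auto|]. split.
    { intros u. apply (continuous_ext V). intros; symmetry; auto.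
      unfold V. apply cR_mult. apply cR_const. apply cR_mult; [|apply cR_const]. apply cR_minus.
      apply (cR_comp (fun y => y - c) (fun y => tp y (S r))). apply cR_minus. apply cR_id. apply cR_const. apply tp_cont; lia.
      apply (cR_comp (fun y => y - d) (fun y => tp y (S r))). apply cR_minus. apply cR_id. apply cR_const. apply tp_cont; lia. }
    split. rewrite HMe; auto.
    apply (isR_ext_open V). intros; symmetry; auto.
    assert (Hc2 := tp_lin_int (S r) c (-1) 1). assert (Hd2 := tp_lin_int (S r) d (-1) 1).
    rewrite (tp_nonpos (-1 - c)) in Hc2 by lra. rewrite (tp_nonpos (-1 - d)) in Hd2 by lra.
    rewrite (tp_nonneg (1 - c)) in Hc2 by lra. rewrite (tp_nonneg (1 - d)) in Hd2 by lra.
    pose proof (isR_minus _ _ _ _ _ _ Hc2 Hd2) as H3.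
    apply isR_scal with (k := v / INR (S r)) in H3.
    eapply isR_ext_open; [|replace (/ INR (S r) * Mom c d) with (v / INR (S r) * (((1 - c) ^ S (S r) - 0) / INR (S (S r)) - ((1 - d) ^ S (S r) - 0) / INR (S (S r)))); [exact H3|]].
    intros; unfold V; unfold Rdiv; ring.
    rewrite HMe. unfold Mv. unfold Rdiv; ring.
  - assert (Hce := stepf_le s c e H1). assert (Hed := stepf_le s e d H2).
    destruct (IH1 Hc ltac:(lra)) as [A1 [B1 [C1 D1]]].
    destruct (IH2 ltac:(lra) Hd) as [A2 [B2 [C2 D2]]].
    assert (HP : forall u, PsiCD c d u = PsiCD c e u + PsiCD e d u).
    { intros u. apply isR_unique. apply isR_Chasles with e; auto. }
    assert (HM : Mom c d = Mom c e + Mom e d).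
    { apply isR_unique. apply isR_Chasles with e; auto. }
    split. intros u. rewrite HP. apply isR_Chasles with e; auto.
    split. intros u. apply (continuous_ext (fun u => PsiCD c e u + PsiCD e d u)). intros; symmetry; auto.
    apply cR_plus; auto.
    split. rewrite HM. apply isR_Chasles with e; auto.
    apply (isR_ext_open (fun u => PsiCD c e u + PsiCD e d u)). intros; symmetry; auto.
    rewrite HM. rewrite Rmult_plus_distr_l. apply isR_plus; auto.
Qed.

End PsiStep.

Lemma psi_props r :
  (forall u, continuous (psi r) u) /\
  is_RInt (psi r) (-1) 1 (/ INR (Factorial.fact (S r)) *
     RInt (fun t => (1 - t) ^ S r * sgnR (chebU (r + 1) t)) (-1) 1).
Proof.
  set (s := fun t => sgnR (chebU (r + 1) t)).
  destruct (stepf_psi s r (-1) 1 (cheb_step (r + 1)) ltac:(lra) ltac:(lra)) as [_ [B [_ D]]].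
  split.
  - intros u. apply (continuous_ext (fun u => / INR (Factorial.fact r) * PsiCD s r (-1) 1 u)).
    intros; reflexivity. apply cR_mult. apply cR_const. auto.
  - apply (isR_ext_open (fun u => / INR (Factorial.fact r) * PsiCD s r (-1) 1 u)). intros; reflexivity.
    replace (/ INR (Factorial.fact (S r)) * RInt (fun t => (1 - t) ^ S r * sgnR (chebU (r + 1) t)) (-1) 1)
      with (/ INR (Factorial.fact r) * (/ INR (S r) * Mom s r (-1) 1)).
    apply isR_scal; auto.
    unfold Mom, s. change (Factorial.fact (S r)) with (S r * Factorial.fact r)%nat. rewrite mult_INR.
    field. split. apply not_0_INR, Factorial.fact_neq_0. apply not_0_INR; lia.
Qed.

Lemma sumR_scal K X (G : nat -> R) : sumR K (fun j => X * G j) = X * sumR K G.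
Proof. induction K; simpl. ring. rewrite IHK. ring. Qed.

Lemma sumR_plus K (F G : nat -> R) : sumR K (fun j => F j + G j) = sumR K F + sumR K G.
Proof. induction K; simpl. ring. rewrite IHK. ring. Qed.

Lemma sumR_swap K1 K2 (c l : nat -> R) (X : nat -> nat -> R) :
  sumR K1 (fun j => c j * sumR K2 (fun i => l i * X j i)) =
  sumR K2 (fun i => l i * sumR K1 (fun j => c j * X j i)).
Proof.
  induction K1; simpl.
  - induction K2; simpl. ring. rewrite <- IHK2. ring.
  - rewrite IHK1. rewrite <- sumR_scal.
    rewrite <- sumR_plus. apply sumR_ext. intros; ring.
Qed.

Lemma isR_sum K (lam : nat -> R) (F : nat -> R -> R) (v : nat -> R) a b :
  (forall i, (i < K)%nat -> is_RInt (F i) a b (v i)) ->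
  is_RInt (fun x => sumR K (fun i => lam i * F i x)) a b (sumR K (fun i => lam i * v i)).
Proof.
  induction K; intros H; simpl. apply isR_zero.
  apply isR_plus. apply IHK; intros; apply H; lia. apply isR_scal. apply H; lia.
Qed.

Lemma change_var p q (F : R -> R) : p < q -> (forall x, continuous F x) ->
  is_RInt (fun t => F ((2 * t - p - q) / (q - p))) p q ((q - p) / 2 * RInt F (-1) 1).
Proof.
  intros Hpq Hc. pose proof (RInt_cont_correct F (-1) 1 Hc) as H.
  set (u := 2 / (q - p)). set (v := - (p + q) / (q - p)).
  assert (E1 : u * p + v = -1) by (unfold u, v; field; lra).
  assert (E2 : u * q + v = 1) by (unfold u, v; field; lra).
  rewrite <- E1, <- E2 in H. apply isR_comp_lin in H.
  apply isR_scal with (k := (q - p) / 2) in H.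
  rewrite E1, E2 in H. eapply isR_ext_open; [|exact H].
  intros x _. cbv beta. replace ((q - p) / 2 * (u * F (u * x + v))) with (((q - p) / 2 * u) * F (u * x + v)) by ring.
  replace ((q - p) / 2 * u) with 1 by (unfold u; field; lra).
  replace (u * x + v) with ((2 * x - p - q) / (q - p)) by (unfold u, v; field; lra). ring.
Qed.

Lemma phi_cont alpha r c d x : continuous (phi alpha r c d) x.
Proof.
  unfold phi. apply cR_mult. apply cR_const.
  apply (cR_comp (fun x => (2 * x - d - c) / (d - c)) (psi r)).
  apply cR_mult; [|apply cR_const]. apply cR_minus; [|apply cR_const]. apply cR_minus; [|apply cR_const].
  apply cR_mult. apply cR_const. apply cR_id.
  apply psi_props.
Qed.

Lemma piece_full a b p q m (F phi : R -> R) :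
  a <= p -> p < q -> q <= b -> (forall x, continuous phi x) -> (forall x, continuous F x) ->
  (forall t, p < t < q -> (b - t) ^ m / INR (Factorial.fact m) * phi t = F ((2 * t - p - q) / (q - p))) ->
  iterInt a (S m) (pieceF p q phi) b = (q - p) / 2 * RInt F (-1) 1.
Proof.
  intros H1 H2 H3 H4 H5 H6. rewrite piece_iter by (auto; lra).
  apply isR_unique. eapply isR_ext_open; [|apply change_var; auto].
  intros x Hx. rewrite Rmin_left, Rmax_right in Hx by lra. symmetry; apply H6; lra.
Qed.

Theorem mainTheorem5 (r k n : nat) (alpha a b : R) (c lambda : nat -> R) :
  (1 <= r)%nat -> (1 <= k)%nat -> (1 <= n)%nat -> a < b ->
  (forall x : R,
      sumR k (fun j => c j * (1 / 2 + INR j / (2 * INR k) - x) ^ (k - 1)) = 1) ->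
  let N := (2 * k * n)%nat in
  let hbar := (b - a) / INR N in
  let I := fun j : nat =>
    iterInt a k
      (fun y => sumR (k * n) (fun i => lambda i * fpiece alpha r a b N (Xmap n k j i) y))
      b in
  sumR k (fun j => c j * I j)
    = hbar ^ (r + 1) * (b - a) ^ (k - 1) * / INR (Factorial.fact (k - 1)) * phi1 alpha r
      * sumR (k * n) lambda
  /\
  hbar ^ (r + 1) * (b - a) ^ (k - 1) * / INR (Factorial.fact (k - 1)) * phi1 alpha r
      * sumR (k * n) lambda
    = / (INR (k * n)) ^ r * (b - a) ^ (k + r) * / 2 ^ (r + 1)
      * (phi1 alpha r / INR (Factorial.fact (k - 1)))
      * (/ INR (k * n) * sumR (k * n) lambda).
Proof.
  intros Hr Hk Hn Hab Hc N hbar I.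
  assert (HkR : 0 < INR k) by (apply lt_0_INR; lia).
  assert (HnR : 0 < INR n) by (apply lt_0_INR; lia).
  assert (HN : INR N = 2 * INR k * INR n) by (unfold N; rewrite !mult_INR; simpl; ring).
  assert (Hh : 0 < hbar) by (unfold hbar; rewrite HN; apply Rdiv_lt_0_compat; nra).
  assert (HhN : hbar * (2 * INR k * INR n) = b - a) by (unfold hbar; rewrite HN; field; lra).
  assert (Hfk : INR (Factorial.fact (k - 1)) <> 0) by (apply not_0_INR, Factorial.fact_neq_0).
  set (K := (k * n)%nat).
  set (Ipsi := RInt (psi r) (-1) 1).
  destruct (psi_props r) as [Hpsic HpsiI].
  set (C := (b - a) ^ (k - 1) / INR (Factorial.fact (k - 1)) * (alpha * (hbar / 2) ^ r)).
  set (F := fun j i u => ((b - a) * (1 / 2 + INR j / (2 * INR k)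
        - (INR i - 1 / 2 + u / 2) / (2 * INR k * INR n))) ^ (k - 1) / INR (Factorial.fact (k - 1))
        * (alpha * (hbar / 2) ^ r * psi r u)).
  assert (HFc : forall j i u, continuous (F j i) u).
  { intros j i u. unfold F. apply cR_mult. apply cR_mult; [|apply cR_const]. apply cR_pow.
    apply cR_mult. apply cR_const. apply cR_minus. apply cR_const.
    apply cR_mult; [|apply cR_const]. apply cR_plus. apply cR_const. apply cR_mult; [|apply cR_const]. apply cR_id.
    apply cR_mult. apply cR_const. auto. }
  assert (Step2 : forall i, sumR k (fun j => c j * RInt (F j i) (-1) 1) = C * Ipsi).
  { intros i. symmetry. apply isR_unique in HpsiI.
    assert (H := isR_sum k c (fun j => F j i) (fun j => RInt (F j i) (-1) 1) (-1) 1
                   (fun j _ => RInt_cont_correct (F j i) (-1) 1 (HFc j i))).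
    symmetry. apply isR_unique in H. rewrite <- H. apply isR_unique.
    apply (isR_ext_open (fun u => C * psi r u)).
    - intros u _. set (x := (INR i - 1 / 2 + u / 2) / (2 * INR k * INR n)).
      rewrite (sumR_ext k _ (fun j => (C * psi r u) * (c j * (1 / 2 + INR j / (2 * INR k) - x) ^ (k - 1)))).
      rewrite sumR_scal, Hc. ring.
      intros j _. unfold F. fold x. rewrite Rpow_mult_distr. unfold C. unfold Rdiv. ring.
    - apply isR_scal. apply RInt_cont_correct; auto. }
  assert (Step1 : forall j, (j < k)%nat ->
     I j = sumR K (fun i => lambda i * (hbar / 2 * RInt (F j i) (-1) 1))).
  { intros j Hj. unfold I.
    set (P := fun i => a + INR (Xmap n k j i) * hbar).
    set (Q := fun i => a + INR (Xmap n k j i + 1) * hbar).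
    set (Ph := fun i => phi alpha r (P i) (Q i)).
    assert (HPhc : forall i x, continuous (Ph i) x) by (intros; apply phi_cont).
    assert (Hidx : forall i, (i < K)%nat -> (Xmap n k j i + 1 = n * (k - j) + i)%nat /\ (Xmap n k j i + 1 <= N)%nat).
    { intros i Hi. unfold Xmap, N, K in *. assert (1 <= k - j)%nat by lia.
      assert (n <= n * (k - j))%nat by nia. assert (n * (k - j) <= n * k)%nat by nia. split; nia. }
    assert (HQP : forall i, Q i - P i = hbar).
    { intros i. unfold Q, P. rewrite plus_INR. simpl. ring. }
    assert (HPQ : forall i, (i < K)%nat -> a <= P i /\ P i < Q i /\ Q i <= b).
    { intros i Hi. destruct (Hidx i Hi) as [_ Hle]. pose proof (HQP i).
      split. unfold P. pose proof (pos_INR (Xmap n k j i)). nra. split. lra.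
      unfold Q. apply le_INR in Hle. rewrite HN in Hle. nra. }
    rewrite (iterInt_ext a k _ (fun y => sumR K (fun i => lambda i * pieceF (P i) (Q i) (Ph i) y)))
      by (intros; reflexivity).
    replace k with (S (k - 1)) at 1 by lia.
    rewrite iterInt_shift.
    rewrite (iterInt_ext a (k - 1) _ (fun z => sumR K (fun i => lambda i * Gp (P i) (Q i) (Ph i) z))).
    2:{ intros z. apply isR_unique. apply (isR_sum K lambda (fun i => pieceF (P i) (Q i) (Ph i)) (fun i => Gp (P i) (Q i) (Ph i) z)). intros i Hi. destruct (HPQ i Hi) as [A1 [A2 A3]].
        apply piece_RInt; auto; lra. }
    rewrite iterInt_lin by (intros; apply Gp_cont; auto).
    apply sumR_ext. intros i Hi. f_equal.
    destruct (HPQ i Hi) as [A1 [A2 A3]].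
    replace (hbar / 2 * RInt (F j i) (-1) 1) with ((Q i - P i) / 2 * RInt (F j i) (-1) 1) by (rewrite HQP; reflexivity).
    rewrite (iterInt_ext a (k - 1) _ (fun z => RInt (pieceF (P i) (Q i) (Ph i)) a z))
      by (intros; symmetry; apply piece_RInt_eq; auto; lra).
    rewrite <- iterInt_shift.
    apply piece_full; auto.
    intros t Ht. unfold Ph, phi, F.
    assert (Hbt : b - t = (b - a) * (1 / 2 + INR j / (2 * INR k)
        - (INR i - 1 / 2 + (2 * t - P i - Q i) / (Q i - P i) / 2) / (2 * INR k * INR n))).
    { rewrite HQP. destruct (Hidx i Hi) as [E _].
      assert (EI : INR (Xmap n k j i) + 1 = INR n * (INR k - INR j) + INR i).
      { rewrite <- S_INR. replace (S (Xmap n k j i)) with (n * (k - j) + i)%nat by lia.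
        rewrite plus_INR, mult_INR, minus_INR by lia. reflexivity. }
      unfold Q, P. rewrite plus_INR. simpl INR. rewrite <- HhN.
      replace (b - t) with (hbar * (2 * INR k * INR n) + a - t) by lra.
      replace (INR (Xmap n k j i)) with (INR n * (INR k - INR j) + INR i - 1) by lra.
      field. repeat split; lra. }
    rewrite <- Hbt. rewrite HQP. replace (2 * t - Q i - P i) with (2 * t - P i - Q i) by ring. ring. }
  split.
  - rewrite (sumR_ext k _ (fun j => c j * sumR K (fun i => lambda i * (hbar / 2 * RInt (F j i) (-1) 1))))
      by (intros; rewrite Step1; auto).
    rewrite sumR_swap.
    rewrite (sumR_ext K _ (fun i => (hbar / 2 * (C * Ipsi)) * lambda i)).
    2:{ intros i _. rewrite (sumR_ext k _ (fun j => hbar / 2 * (c j * RInt (F j i) (-1) 1))) by (intros; ring).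
        rewrite sumR_scal, Step2. ring. }
    rewrite sumR_scal.
    assert (Hphi1 : phi1 alpha r = (1 / 2) ^ (r + 1) * alpha * Ipsi).
    { unfold phi1, Ipsi. apply isR_unique in HpsiI. rewrite HpsiI.
      replace (Factorial.fact (r + 1)) with (Factorial.fact (S r)) by (f_equal; lia).
      rewrite (RInt_ext_all (fun t => (1 - t) ^ (r + 1) * sgnR (chebU (r + 1) t))
         (fun t => (1 - t) ^ S r * sgnR (chebU (r + 1) t))) by (intros; f_equal; f_equal; lia).
      unfold Rdiv. ring. }
    rewrite Hphi1. unfold C. rewrite Nat.add_1_r. simpl pow.
    replace ((hbar / 2) ^ r) with (hbar ^ r * (1 / 2) ^ r) by (rewrite <- Rpow_mult_distr; f_equal; unfold Rdiv; ring).
    unfold Rdiv. ring.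
  - replace ((b - a) ^ (k + r)) with ((b - a) ^ (k - 1) * (b - a) ^ (r + 1)) by (rewrite <- pow_add; f_equal; lia).
    assert (HKn : INR K = INR k * INR n) by (unfold K; apply mult_INR).
    rewrite HKn. unfold hbar. rewrite HN.
    replace (((b - a) / (2 * INR k * INR n)) ^ (r + 1)) with ((b - a) ^ (r + 1) / (2 ^ (r + 1) * (INR k * INR n) ^ r * (INR k * INR n))).
    2:{ symmetry. unfold Rdiv. rewrite Rpow_mult_distr, pow_inv. f_equal. f_equal. rewrite Nat.add_1_r. simpl pow.
        rewrite !Rpow_mult_distr. ring. }
    field. repeat split; try (apply pow_nonzero); try nra.
Qed.
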